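(* Fix an integer $r\ge1$. Then: (1) as $\eta\to0^+$, \[ \xi_r^\ast(\eta)=2\log\left(4^r\eta\sqrt{\Psi^r(0)\prod_{k=1}^{r}\Psi^k(0)}\right)+O(\eta); \] (2) as $\eta\to0^+$, \[ \xi_r^\ast\left(\frac{1}{2^r}-\eta\right)=-2^r\log\left(2^{\,r-1+2^{1-r}}\eta\right)+O(\eta). \]
   Context: $\varphi(\xi)=\frac{\xi}{4}+\log\cosh\frac{\xi}{4}$ for $\xi\in\mathbb{R}$, and $\varphi^r$ is its $r$-fold composition; $\varphi^r$ is strictly increasing and strictly convex on $\mathbb{R}$, and its derivative $(\varphi^r)'$ is a strictly increasing bijection from $\mathbb{R}$ onto $(0,2^{-r})$. For $y\in(0,2^{-r})$, $\xi_r^\ast(y)$ denotes the unique real number with $(\varphi^r)'(\xi_r^\ast(y))=y$. For $X\in[0,\infty)$, $\Psi(X)=\frac{\sqrt{X}+1}{2}$, and $\Psi^k$ denotes the $k$-fold composition of $\Psi$. *)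

(* Defs.v *)
From Stdlib Require Import Reals Lra ClassicalEpsilon.
Open Scope R_scope.

Definition phi (xi : R) : R := xi / 4 + ln (cosh (xi / 4)).

Definition phi_iter (r : nat) : R -> R := Nat.iter r phi.

(* xi_r^*(y): the (unique, by the paper's context) real xi with (phi^r)'(xi) = y.
   Chosen by Hilbert's epsilon among the solutions of derivable_pt_lim. *)
Definition xi_star (r : nat) (y : R) : R :=
  epsilon (inhabits 0%R) (fun xi => derivable_pt_lim (phi_iter r) xi y).

Definition Psi (X : R) : R := (sqrt X + 1) / 2.
Definition Psi_iter (k : nat) : R -> R := Nat.iter k Psi.

Fixpoint prod_Psi (n : nat) : R :=
  match n with
  | O => 1
  | S m => prod_Psi m * Psi_iter (S m) 0
  end.

(* Main.v *)
From Stdlib Require Import Reals Lra Lia ClassicalEpsilon.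
From Coquelicot Require Import Coquelicot.
Require Import Defs.
From Stdlib Require Import Reals.
Open Scope R_scope.

Definition g (t:R) := / (2 * (1 + exp (- t / 2))).

Lemma exp_half t : exp (- t / 2) = / (exp (t/4) * exp (t/4)).
Proof. rewrite <- exp_plus, <- exp_Ropp. f_equal. field. Qed.

Lemma dphi t : derivable_pt_lim phi t (g t).
Proof.
  apply is_derive_Reals. unfold phi. auto_derive.
  - unfold cosh. pose proof (exp_pos (t * /4)); pose proof (exp_pos (- (t * /4))). lra.
  - unfold g, cosh, sinh. rewrite exp_half.
    replace (t * / 4) with (t/4) by field.
    rewrite exp_Ropp. pose proof (exp_pos (t/4)). field. nra.
Qed.

Lemma gc t : continuity_pt g t.
Proof. unfold g. reg. all: pose proof (exp_pos (-t/2)); lra. Qed.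

Definition Psi_pos X : 0 < Psi X.
Proof. unfold Psi. pose proof (sqrt_pos X). lra. Qed.

Lemma sqrt_exp t : sqrt (exp t) = exp (t/2).
Proof. replace (exp t) with (exp (t/2) * exp (t/2)). apply sqrt_square.
  pose proof (exp_pos (t/2)); lra. rewrite <- exp_plus; f_equal; field. Qed.

Lemma phi_eq t : phi t = ln (Psi (exp t)).
Proof.
  unfold phi, Psi, cosh. rewrite sqrt_exp.
  pose proof (exp_pos (t/4)). pose proof (exp_pos (-(t/4))).
  rewrite <- (ln_exp (t/4)) at 1. rewrite <- ln_mult by lra. f_equal.
  replace (exp (t/2)) with (exp (t/4) * exp (t/4)) by (rewrite <- exp_plus; f_equal; field).
  rewrite exp_Ropp. field. lra.
Qed.

Lemma Psi_iter_pos k x : 0 < x -> 0 < Psi_iter k x.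
Proof. destruct k; simpl; auto. intros; apply Psi_pos. Qed.

Lemma phi_iter_eq k t : phi_iter k t = ln (Psi_iter k (exp t)).
Proof.
  induction k; simpl. rewrite ln_exp; auto.
  change (phi (phi_iter k t) = ln (Psi (Psi_iter k (exp t)))).
  rewrite IHk, phi_eq, exp_ln; auto. apply Psi_iter_pos, exp_pos.
Qed.

Fixpoint Dr (r:nat) (t:R) : R :=
  match r with O => 1 | S m => g (phi_iter m t) * Dr m t end.

Lemma dphi_iter r t : derivable_pt_lim (phi_iter r) t (Dr r t).
Proof.
  induction r; simpl.
  - apply derivable_pt_lim_id.
  - apply (derivable_pt_lim_comp (phi_iter r) phi t (Dr r t) (g (phi_iter r t))); auto.
    apply dphi.
Qed.

Lemma phi_iter_cont r t : continuity_pt (phi_iter r) t.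
Proof. apply derivable_continuous_pt. exists (Dr r t). apply dphi_iter. Qed.

Lemma Dr_cont r : continuity (Dr r).
Proof.
  intro t. induction r; simpl.
  - apply continuity_pt_const. intros a b; auto.
  - apply (continuity_pt_mult (fun t => g (phi_iter r t)) (Dr r)); auto.
    apply (continuity_pt_comp (phi_iter r) g). apply phi_iter_cont. apply gc.
Qed.

Lemma g_pos t : 0 < g t.
Proof. unfold g. pose proof (exp_pos (-t/2)). apply Rinv_0_lt_compat; lra. Qed.

Lemma g_half t : g t <= /2.
Proof. unfold g. pose proof (exp_pos (-t/2)). apply Rinv_le_contravar; lra. Qed.

Lemma g_incr a b : a < b -> g a < g b.
Proof. intro H. unfold g. assert (exp (-b/2) < exp (-a/2)) by (apply exp_increasing; lra).
  pose proof (exp_pos (-b/2)). apply Rinv_lt_contravar; nra. Qed.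

Lemma Psi_incr a b : 0 <= a < b -> Psi a < Psi b.
Proof. intros H. unfold Psi. pose proof (sqrt_lt_1_alt a b H). lra. Qed.

Lemma phi_incr a b : a < b -> phi a < phi b.
Proof. intros H. rewrite !phi_eq. apply ln_increasing. apply Psi_pos.
  apply Psi_incr. pose proof (exp_pos a). pose proof (exp_increasing a b H). lra. Qed.

Lemma phi_iter_incr r a b : a < b -> phi_iter r a < phi_iter r b.
Proof. intros H; induction r; simpl; auto. apply phi_incr; auto. Qed.

Lemma Dr_pos r t : 0 < Dr r t.
Proof. induction r; simpl. lra. pose proof (g_pos (phi_iter r t)); nra. Qed.

Lemma Dr_mono r a b : a <= b -> Dr r a <= Dr r b.
Proof. intros H; induction r; simpl. lra.
  destruct (Req_dec a b). subst; lra.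
  pose proof (g_incr _ _ (phi_iter_incr r a b ltac:(lra))).
  pose proof (g_pos (phi_iter r a)). pose proof (Dr_pos r a). nra. Qed.

Lemma Dr_sincr r a b : a < b -> Dr (S r) a < Dr (S r) b.
Proof. intros H; simpl.
  pose proof (g_incr _ _ (phi_iter_incr r a b H)).
  pose proof (g_pos (phi_iter r a)). pose proof (Dr_pos r a). pose proof (Dr_mono r a b ltac:(lra)). nra. Qed.

Lemma Dr_inj r a b : (1 <= r)%nat -> Dr r a = Dr r b -> a = b.
Proof. intros Hr H. destruct r. lia.
  destruct (Rtotal_order a b) as [h|[h|h]]; auto.
  apply Dr_sincr with (r:=r) in h; lra. apply Dr_sincr with (r:=r) in h; lra. Qed.

Lemma xi_star_spec r y z : (1 <= r)%nat -> Dr r z = y -> xi_star r y = z.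
Proof.
  intros Hr Hz. unfold xi_star.
  pose proof (epsilon_spec (inhabits 0) (fun xi => derivable_pt_lim (phi_iter r) xi y)) as H.
  simpl in H. assert (E : exists x, derivable_pt_lim (phi_iter r) x y) by (exists z; rewrite <- Hz; apply dphi_iter).
  specialize (H E).
  apply (Dr_inj r); auto. rewrite Hz. eapply uniqueness_limite. apply dphi_iter. exact H.
Qed.

Fixpoint Pr (n:nat) (x:R) : R := match n with O => 1 | S m => Pr m x * Psi_iter (S m) x end.
Definition G r x := Psi_iter r x * Pr r x.

Lemma Pr_0 n : Pr n 0 = prod_Psi n.
Proof. induction n; simpl; auto. rewrite IHn; auto. Qed.

Lemma g_ln Q : 0 < Q -> g (ln Q) = / (2 * (1 + / sqrt Q)).
Proof. intros HQ. unfold g. f_equal. f_equal. f_equal.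
  rewrite <- (exp_ln Q HQ) at 2. rewrite sqrt_exp, <- exp_Ropp. f_equal; field. Qed.

Lemma g_ln4 Q : 0 < Q -> g (ln Q) * (4 * Psi Q) = sqrt Q.
Proof. intros HQ. rewrite g_ln; auto. unfold Psi. pose proof (sqrt_lt_R0 Q HQ). field. lra. Qed.

Lemma Dr_closed r t : (Dr r t * 4 ^ r) ^ 2 * G r (exp t) = exp t.
Proof.
  induction r.
  - unfold G; simpl. ring.
  - unfold G in *. simpl Dr. rewrite phi_iter_eq.
    set (Q := Psi_iter r (exp t)) in *.
    assert (HQ : 0 < Q) by (apply Psi_iter_pos, exp_pos).
    simpl Pr. change (Psi_iter (S r) (exp t)) with (Psi Q). fold Q.
    pose proof (g_ln4 Q HQ) as E.
    assert (sqrt Q * sqrt Q = Q) by (apply sqrt_sqrt; lra).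
    simpl pow. simpl pow in IHr.
    transitivity ((g (ln Q) * (4 * Psi Q)) * (g (ln Q) * (4 * Psi Q)) * ((Dr r t * 4^r)*(Dr r t * 4^r) * Pr r (exp t))). ring.
    rewrite E, H. etransitivity; [|exact IHr]. ring.
Qed.

Lemma Psi_ge a : /2 <= Psi a.
Proof. unfold Psi. pose proof (sqrt_pos a). lra. Qed.

Lemma Psi_le a b : 0 <= a <= b -> Psi a <= Psi b.
Proof. intros H. unfold Psi. pose proof (sqrt_le_1_alt a b ltac:(lra)). lra. Qed.

Lemma Psi_iter_nonneg k x : 0 <= x -> 0 <= Psi_iter k x.
Proof. destruct k; simpl; auto. intros; pose proof (Psi_ge (Psi_iter k x)); lra. Qed.

Lemma Psi_iter_le k a b : 0 <= a <= b -> Psi_iter k a <= Psi_iter k b.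
Proof. intros H; induction k; simpl. lra.
  apply Psi_le. split; auto. apply Psi_iter_nonneg; lra. Qed.

Lemma Psi_iter_1 k : Psi_iter k 1 = 1.
Proof. induction k; simpl; auto. change (Psi (Psi_iter k 1) = 1). rewrite IHk. unfold Psi; rewrite sqrt_1; lra. Qed.

Lemma Pr_1 n : Pr n 1 = 1.
Proof. induction n; simpl; auto. rewrite IHn. change (1 * Psi (Psi_iter n 1) = 1). rewrite Psi_iter_1. unfold Psi; rewrite sqrt_1; lra. Qed.

Lemma G_1 r : G r 1 = 1.
Proof. unfold G. rewrite Psi_iter_1, Pr_1. ring. Qed.

Lemma Pr_pos n x : 0 < Pr n x.
Proof. induction n; simpl. lra. pose proof (Psi_ge (Psi_iter n x)). change (0 < Pr n x * Psi (Psi_iter n x)). nra. Qed.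

Lemma Pr_le n a b : 0 <= a <= b -> Pr n a <= Pr n b.
Proof. intros H; induction n; cbn [Pr]. lra.
  pose proof (Pr_pos n b). pose proof (Psi_iter_le (S n) a b H). pose proof (Psi_iter_nonneg (S n) a ltac:(lra)).
  pose proof (Pr_pos n a). nra. Qed.

Lemma G_le r a b : 0 <= a <= b -> G r a <= G r b.
Proof. intros H. unfold G. pose proof (Psi_iter_le r a b H). pose proof (Psi_iter_nonneg r a ltac:(lra)).
  pose proof (Pr_le r a b H). pose proof (Pr_pos r a). nra. Qed.

Lemma G_pos r x : 0 < x -> 0 < G r x.
Proof. intros. unfold G. pose proof (Psi_iter_pos r x H). pose proof (Pr_pos r x). nra. Qed.

Lemma G0_pos r : (1 <= r)%nat -> 0 < G r 0.
Proof. intros. destruct r. lia. unfold G. pose proof (Psi_ge (Psi_iter r 0)). pose proof (Pr_pos (S r) 0).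
  change (0 < Psi (Psi_iter r 0) * Pr (S r) 0). nra. Qed.

Lemma Psi_iter_le1 k y : 0 <= y <= 1 -> Psi_iter k y <= 1.
Proof. intros. rewrite <- (Psi_iter_1 k). apply Psi_iter_le. lra. Qed.

Lemma Psi_diff k x : 0 <= x <= 1 -> Psi_iter (S k) x - Psi_iter (S k) 0 <= sqrt x / 2.
Proof.
  intros Hx. induction k.
  - simpl. unfold Psi. rewrite sqrt_0. lra.
  - change (Psi (Psi_iter (S k) x) - Psi (Psi_iter (S k) 0) <= sqrt x / 2).
    set (a := Psi_iter (S k) x) in *. set (b := Psi_iter (S k) 0) in *.
    assert (hb : /2 <= b) by apply Psi_ge.
    assert (hab : b <= a) by (apply Psi_iter_le; lra).
    assert (ha1 : a <= 1) by (apply Psi_iter_le1; lra).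
    unfold Psi.
    pose proof (sqrt_sqrt a ltac:(lra)). pose proof (sqrt_sqrt b ltac:(lra)).
    pose proof (sqrt_le_1_alt b a hab).
    pose proof (sqrt_pos b). pose proof (sqrt_pos x).
    assert (sqrt b + sqrt a >= 1) by nra.
    assert (sqrt a - sqrt b <= a - b) by nra.
    lra.
Qed.

Lemma Pr_diff n x : 0 <= x <= 1 -> Pr n x - Pr n 0 <= INR n * sqrt x / 2 /\ Pr n x <= 1.
Proof.
  intros Hx. induction n.
  - simpl. lra.
  - cbn [Pr]. rewrite S_INR. destruct IHn as [h1 h2].
    pose proof (Psi_diff n x Hx). pose proof (Psi_iter_le1 (S n) x Hx).
    pose proof (Psi_iter_le (S n) 0 x ltac:(lra)).
    pose proof (Psi_iter_nonneg (S n) 0 ltac:(lra)).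
    pose proof (Psi_iter_le1 (S n) 0 ltac:(lra)).
    pose proof (Pr_pos n x). pose proof (Pr_pos n 0). pose proof (sqrt_pos x).
    pose proof (Pr_le n 0 x ltac:(lra)).
    set (Px := Pr n x) in *. set (P0 := Pr n 0) in *. set (Qx := Psi_iter (S n) x) in *. set (Q0 := Psi_iter (S n) 0) in *.
    assert (Px * (Qx - Q0) <= Qx - Q0) by nra.
    assert (Q0 * (Px - P0) <= Px - P0) by nra.
    split; nra.
Qed.

Lemma G_diff m x : 0 <= x <= 1 -> G (S m) x - G (S m) 0 <= INR (S (S m)) * sqrt x / 2.
Proof.
  intros Hx. unfold G. destruct (Pr_diff (S m) x Hx) as [h1 h2]. rewrite (S_INR (S m)).
  pose proof (Pr_pos (S m) x). pose proof (Pr_pos (S m) 0). pose proof (sqrt_pos x).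
  pose proof (Pr_le (S m) 0 x ltac:(lra)).
  pose proof (Psi_iter_le (S m) 0 x ltac:(lra)).
  pose proof (Psi_iter_nonneg (S m) 0 ltac:(lra)).
  pose proof (Psi_iter_le1 (S m) 0 ltac:(lra)).
  pose proof (Psi_diff m x Hx).
  set (Px := Pr (S m) x) in *. set (P0 := Pr (S m) 0) in *. set (Qx := Psi_iter (S m) x) in *. set (Q0 := Psi_iter (S m) 0) in *.
  assert (Px * (Qx - Q0) <= Qx - Q0) by nra.
  assert (Q0 * (Px - P0) <= Px - P0) by nra.
  nra.
Qed.

Lemma ln_le_sub1 y : 0 < y -> ln y <= y - 1.
Proof. intros. destruct (Req_dec y 1). subst; rewrite ln_1; lra.
  pose proof (exp_ineq1 (ln y) (ln_neq_0 y H0 H)). rewrite exp_ln in H1; lra. Qed.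

Lemma ln_le a b : 0 < a -> a <= b -> ln a <= ln b.
Proof. intros. destruct (Req_dec a b). subst; lra. left; apply ln_increasing; lra. Qed.

Lemma part1 r (hr : (1 <= r)%nat) :
  exists C delta : R, 0 < C /\ 0 < delta /\
     forall eta : R, 0 < eta < delta ->
       Rabs (xi_star r eta
             - 2 * ln (4 ^ r * eta * sqrt (Psi_iter r 0 * prod_Psi r)))
       <= C * eta.
Proof.
  destruct r as [|m]; [lia|].
  set (K := G (S m) 0).
  assert (HK : 0 < K) by (apply G0_pos; lia).
  assert (HK1 : K <= 1) by (rewrite <- (G_1 (S m)); apply G_le; lra).
  set (p := 4 ^ S m). assert (hp : 0 < p) by (apply pow_lt; lra).
  exists (INR (S (S m)) * p / K), (/p).
  pose proof (pos_INR (S m)). rewrite S_INR.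
  split. apply Rdiv_lt_0_compat; nra.
  split. apply Rinv_0_lt_compat; auto.
  intros eta [he1 he2].
  assert (Heq : Psi_iter (S m) 0 * prod_Psi (S m) = K) by (unfold K, G; rewrite Pr_0; auto).
  rewrite Heq. fold p.
  assert (hsK : 0 < sqrt K) by (apply sqrt_lt_R0; auto).
  assert (hsK1 : sqrt K <= 1) by (rewrite <- sqrt_1; apply sqrt_le_1_alt; auto).
  assert (hsKK : sqrt K * sqrt K = K) by (apply sqrt_sqrt; lra).
  assert (hpe : p * eta < 1).
  { apply (Rmult_lt_compat_l p) in he2; auto. rewrite Rinv_r in he2; lra. }
  set (a := p * eta * sqrt K).
  assert (ha : 0 < a) by (unfold a; apply Rmult_lt_0_compat; nra).
  assert (ha1 : a < 1) by (unfold a; nra).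
  set (L := 2 * ln a).
  assert (hL : exp L = a * a).
  { unfold L. replace (2 * ln a) with (ln a + ln a) by ring. rewrite exp_plus, exp_ln; auto. }
  assert (hL0 : L <= 0).
  { unfold L. assert (ln a < ln 1) by (apply ln_increasing; auto). rewrite ln_1 in H0. lra. }
  assert (hD0 : Dr (S m) 0 = / p).
  { pose proof (Dr_closed (S m) 0) as E. rewrite exp_0, G_1 in E. fold p in E.
    pose proof (Dr_pos (S m) 0).
    assert (Hy : (Dr (S m) 0 * p - 1) * (Dr (S m) 0 * p + 1) = 0) by nra.
    apply Rmult_integral in Hy. assert (Dr (S m) 0 * p = 1) by (destruct Hy; nra).
    field_simplify_eq; lra. }
  assert (hDL : Dr (S m) L <= eta).
  { pose proof (Dr_closed (S m) L) as E. fold p in E.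
    assert (K <= G (S m) (exp L)) by (apply G_le; pose proof (exp_pos L); lra).
    pose proof (Dr_pos (S m) L).
    assert (E2 : a * a = (p*eta) * (p*eta) * K) by (unfold a; transitivity (p*eta*(p*eta)*(sqrt K*sqrt K)); [ring| rewrite hsKK; ring]).
    assert ((Dr (S m) L * p) ^ 2 * K <= (Dr (S m) L * p) ^ 2 * G (S m) (exp L)).
    { apply Rmult_le_compat_l; auto. apply pow2_ge_0. }
    assert ((Dr (S m) L * p) ^ 2 * K <= (p*eta)*(p*eta)*K) by lra.
    assert (Hq : (Dr (S m) L * p) * (Dr (S m) L * p) <= (p*eta)*(p*eta)).
    { apply (Rmult_le_reg_r K); auto. simpl in H3. lra. }
    assert (Dr (S m) L * p <= p * eta).
    { destruct (Rle_dec (Dr (S m) L * p) (p * eta)); auto.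
      assert (p*eta < Dr (S m) L * p) by lra. assert (0 < p*eta) by nra.
      assert ((p*eta)*(p*eta) < (Dr (S m) L * p) * (Dr (S m) L * p)) by (apply Rmult_le_0_lt_compat; lra). lra. }
    apply (Rmult_le_reg_r p); auto; lra. }
  destruct (IVT_cor (fun t => Dr (S m) t - eta) L 0) as (z & [hz1 hz2] & hz).
  { apply continuity_minus. apply Dr_cont. apply continuity_const; intros u v; auto. }
  { auto. }
  { assert (/p > eta).
    { apply (Rmult_lt_compat_l (/p)) in hpe. rewrite <- Rmult_assoc, Rinv_l, Rmult_1_l, Rmult_1_r in hpe; lra.
      apply Rinv_0_lt_compat; auto. }
    nra. }
  assert (hDz : Dr (S m) z = eta) by lra.
  rewrite (xi_star_spec (S m) eta z) by (auto; lia).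
  pose proof (Dr_closed (S m) z) as E. fold p in E. rewrite hDz in E.
  set (x := exp z) in *.
  assert (hx : 0 < x) by apply exp_pos.
  assert (hx1 : x <= 1).
  { unfold x. rewrite <- exp_0. destruct hz2. left; apply exp_increasing; auto. subst; lra. }
  assert (hG : 0 < G (S m) x) by (apply G_pos; auto).
  assert (hGK : K <= G (S m) x) by (apply G_le; lra).
  assert (hG1 : G (S m) x <= 1) by (rewrite <- (G_1 (S m)); apply G_le; lra).
  assert (Hz : z = ln x) by (unfold x; rewrite ln_exp; auto).
  assert (HLa : L = ln (a * a)) by (unfold L; rewrite ln_mult; auto; ring).
  assert (hpe0 : 0 < p * eta) by nra.
  assert (E2 : a * a = (p*eta) * (p*eta) * K) by (unfold a; transitivity (p*eta*(p*eta)*(sqrt K*sqrt K)); [ring| rewrite hsKK; ring]).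
  assert (Hdiff : z - L = ln (G (S m) x) - ln K).
  { rewrite Hz, HLa, E2. rewrite <- E at 1.
    replace ((eta * p) ^ 2) with ((p*eta)*(p*eta)) by ring.
    rewrite !ln_mult; try nra. }
  rewrite Hdiff.
  assert (h1 : ln K <= ln (G (S m) x)) by (apply ln_le; auto).
  assert (h2 : ln (G (S m) x) - ln K <= G (S m) x / K - 1).
  { assert (ln (G (S m) x / K) = ln (G (S m) x) - ln K).
    { unfold Rdiv. rewrite ln_mult, ln_Rinv; auto. apply Rinv_0_lt_compat; auto. }
    rewrite <- H0. apply ln_le_sub1. apply Rdiv_lt_0_compat; auto. }
  pose proof (G_diff m x ltac:(lra)) as h3. fold K in h3. rewrite (S_INR (S m)), S_INR in h3.
  assert (h4 : sqrt x <= p * eta).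
  { rewrite <- (sqrt_square (p*eta)) by lra. apply sqrt_le_1_alt. rewrite <- E. nra. }
  rewrite Rabs_pos_eq by lra.
  assert (h5 : G (S m) x / K - 1 = (G (S m) x - K) / K) by (field; lra).
  rewrite h5 in h2.
  assert (h6 : (G (S m) x - K) / K <= (INR m + 1 + 1) * (p * eta) / 2 / K).
  { unfold Rdiv. apply Rmult_le_compat_r. left; apply Rinv_0_lt_compat; auto.
    pose proof (sqrt_pos x). pose proof (pos_INR m). assert ((INR m + 1 + 1) * sqrt x <= (INR m + 1 + 1) * (p*eta)) by (apply Rmult_le_compat_l; lra). lra. }
  assert (h7 : (INR m + 1 + 1) * (p * eta) / 2 / K <= (INR m + 1 + 1) * p / K * eta).
  { unfold Rdiv. assert (0 < / K) by (apply Rinv_0_lt_compat; auto). nra. }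
  repeat rewrite S_INR. lra.
Qed.

Definition eps k t := / sqrt (Psi_iter k (exp t)).

Lemma Psi_iter_ge1 k x : 1 <= x -> 1 <= Psi_iter k x.
Proof. intros. rewrite <- (Psi_iter_1 k). apply Psi_iter_le; lra. Qed.

Lemma eps_range k t : 0 <= t -> 0 < eps k t <= 1.
Proof. intros Ht. unfold eps.
  assert (1 <= exp t) by (rewrite <- exp_0; destruct Ht; [left; apply exp_increasing|subst]; lra).
  pose proof (Psi_iter_ge1 k _ H).
  assert (1 <= sqrt (Psi_iter k (exp t))) by (rewrite <- sqrt_1; apply sqrt_le_1_alt; auto).
  split. apply Rinv_0_lt_compat; lra. rewrite <- Rinv_1. apply Rinv_le_contravar; lra. Qed.

Lemma two_g k t : 2 * g (phi_iter k t) = / (1 + eps k t).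
Proof. rewrite phi_iter_eq, g_ln by (apply Psi_iter_pos, exp_pos). unfold eps.
  pose proof (sqrt_lt_R0 _ (Psi_iter_pos k _ (exp_pos t))). pose proof (Rinv_0_lt_compat _ H).
  field; repeat split; try lra. Qed.

Lemma eps_sq k t : eps (S k) t ^ 2 = / Psi_iter (S k) (exp t).
Proof. unfold eps. pose proof (Psi_iter_pos (S k) _ (exp_pos t)).
  pose proof (sqrt_sqrt _ (Rlt_le _ _ H)). pose proof (sqrt_lt_R0 _ H).
  replace ((/ sqrt (Psi_iter (S k) (exp t)))^2) with (/ (sqrt (Psi_iter (S k) (exp t)) * sqrt (Psi_iter (S k) (exp t)))) by (field; lra).
  rewrite H0. reflexivity. Qed.

Lemma eps_step k t : 0 <= t -> eps k t <= eps (S k) t ^ 2.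
Proof. intros Ht. rewrite eps_sq. unfold eps.
  change (Psi_iter (S k) (exp t)) with (Psi (Psi_iter k (exp t))). unfold Psi.
  assert (1 <= exp t) by (rewrite <- exp_0; destruct Ht; [left; apply exp_increasing|subst]; lra).
  pose proof (Psi_iter_ge1 k _ H).
  assert (1 <= sqrt (Psi_iter k (exp t))) by (rewrite <- sqrt_1; apply sqrt_le_1_alt; auto).
  replace (/ ((sqrt (Psi_iter k (exp t)) + 1) / 2)) with (/ ((sqrt (Psi_iter k (exp t)) + 1) / 2)) by auto.
  apply Rinv_le_contravar; lra. Qed.

Lemma P_bound m t : 0 < 2 ^ m * Dr m t <= 1.
Proof. induction m; simpl. lra.
  pose proof (g_pos (phi_iter m t)). pose proof (g_half (phi_iter m t)). pose proof (Dr_pos m t). nra. Qed.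

Lemma part2a m t : 0 <= t ->
  1 - 2 ^ S m * Dr (S m) t <= eps m t + INR m * eps m t ^ 2 /\
  eps m t / (1 + eps m t) <= 1 - 2 ^ S m * Dr (S m) t.
Proof.
  intros Ht. induction m.
  - replace (2 ^ 1 * Dr 1 t) with (2 * g (phi_iter 0 t)) by (simpl; ring).
    rewrite two_g. pose proof (eps_range 0 t Ht). simpl INR.
    assert (1 - / (1 + eps 0 t) = eps 0 t / (1 + eps 0 t)) by (field; lra).
    rewrite H0. split; [|lra].
    unfold Rdiv.
    assert (/ (1 + eps 0 t) <= 1) by (rewrite <- Rinv_1; apply Rinv_le_contravar; lra).
    assert (eps 0 t * / (1 + eps 0 t) <= eps 0 t * 1) by (apply Rmult_le_compat_l; lra).
    lra.
  - destruct IHm as [h1 h2].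
    replace (2 ^ S (S m) * Dr (S (S m)) t) with ((2 * g (phi_iter (S m) t)) * (2 ^ S m * Dr (S m) t))
      by (simpl; ring).
    rewrite two_g. pose proof (eps_range (S m) t Ht). pose proof (eps_range m t Ht).
    pose proof (eps_step m t Ht). pose proof (P_bound (S m) t).
    set (P := 2 ^ S m * Dr (S m) t) in *. set (e := eps m t) in *. set (e' := eps (S m) t) in *.
    rewrite S_INR. pose proof (pos_INR m).
    assert (E : 1 - / (1 + e') * P = (1 - P) + P * (e' / (1 + e'))) by (field; lra).
    rewrite E.
    assert (0 <= e' / (1 + e') <= e').
    { split. apply Rdiv_le_0_compat; lra. apply (Rmult_le_reg_r (1+e')). lra.
      unfold Rdiv. rewrite Rmult_assoc, Rinv_l by lra. nra. }
    split.
    + assert (P * (e' / (1 + e')) <= e') by nra.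
      assert (INR m * e ^ 2 <= INR m * e) by (apply Rmult_le_compat_l; nra).
      assert (e <= e' ^ 2) by auto.
      nra.
    + nra.
Qed.

Lemma ln_Psi Q : 1 <= Q -> ln (Psi Q) = ln Q / 2 + ln (1 + / sqrt Q) - ln 2.
Proof.
  intros HQ. pose proof (sqrt_lt_R0 Q ltac:(lra)) as hs. pose proof (sqrt_sqrt Q ltac:(lra)) as hss.
  unfold Psi. unfold Rdiv at 1. rewrite ln_mult, ln_Rinv; try lra.
  replace (sqrt Q + 1) with (sqrt Q * (1 + / sqrt Q)) by (field; lra).
  rewrite ln_mult; try lra. 2: { pose proof (Rinv_0_lt_compat _ hs); lra. }
  assert (ln Q = 2 * ln (sqrt Q)) by (rewrite <- hss at 1; rewrite ln_mult by lra; ring). rewrite H. field.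
Qed.

Lemma part2b k x : 1 <= x ->
  0 <= ln (Psi_iter k x) - ln x / 2 ^ k + 2 * ln 2 * (1 - / 2 ^ k) <= 2 / Psi_iter k x.
Proof.
  intros Hx. induction k.
  - simpl. split. lra. unfold Rdiv. assert (0 < / x) by (apply Rinv_0_lt_compat; lra). lra.
  - change (Psi_iter (S k) x) with (Psi (Psi_iter k x)).
    set (Q := Psi_iter k x) in *.
    assert (HQ : 1 <= Q) by (apply Psi_iter_ge1; auto).
    rewrite ln_Psi by auto.
    pose proof (sqrt_lt_R0 Q ltac:(lra)) as hs. pose proof (sqrt_sqrt Q ltac:(lra)) as hss.
    assert (hs1 : 1 <= sqrt Q) by (rewrite <- sqrt_1; apply sqrt_le_1_alt; auto).
    set (s := sqrt Q) in *. set (e := / s).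
    assert (he : 0 < e <= 1) by (unfold e; split; [apply Rinv_0_lt_compat; lra | rewrite <- Rinv_1; apply Rinv_le_contravar; lra]).
    assert (hl1 : 0 <= ln (1 + e)) by (rewrite <- ln_1; apply ln_le; lra).
    assert (hl2 : ln (1 + e) <= e) by (pose proof (ln_le_sub1 (1+e) ltac:(lra)); lra).
    assert (hQe : 2 / Q = 2 * e * e) by (unfold e; rewrite <- hss; field; lra).
    assert (hpe : 2 / Psi Q = 4 / (s + 1)) by (unfold Psi; fold s; field; lra).
    assert (hes : 2 * e <= 4 / (s+1)) by (unfold e; apply (Rmult_le_reg_r (s * (s+1))); [nra|]; field_simplify; lra).
    rewrite hpe. rewrite hQe in IHk.
    assert (h2k : 0 < 2 ^ k) by (apply pow_lt; lra).
    assert (Eq : ln Q / 2 + ln (1 + e) - ln 2 - ln x / 2 ^ S k + 2 * ln 2 * (1 - / 2 ^ S k)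
      = (ln Q - ln x / 2 ^ k + 2 * ln 2 * (1 - / 2 ^ k)) / 2 + ln (1 + e)) by (simpl; field; lra).
    rewrite Eq. nra.
Qed.

Lemma Dr_at0 r : Dr r 0 * 4 ^ r = 1.
Proof.
  pose proof (Dr_closed r 0) as E. rewrite exp_0, G_1 in E.
  pose proof (Dr_pos r 0). pose proof (pow_lt 4 r ltac:(lra)).
  assert (Hy : (Dr r 0 * 4^r - 1) * (Dr r 0 * 4^r + 1) = 0) by nra.
  apply Rmult_integral in Hy. destruct Hy; nra.
Qed.

Lemma ln_le_inv a b : 0 < a -> 0 < b -> ln a <= ln b -> a <= b.
Proof. intros. destruct H1. left; apply ln_lt_inv; auto. right; apply ln_inv; auto. Qed.

Lemma ln_eps m t : ln (eps m t) = - ln (Psi_iter m (exp t)) / 2.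
Proof.
  unfold eps. pose proof (Psi_iter_pos m _ (exp_pos t)) as HQ.
  pose proof (sqrt_lt_R0 _ HQ) as hs. pose proof (sqrt_sqrt _ (Rlt_le _ _ HQ)) as hss.
  rewrite ln_Rinv by auto.
  assert (ln (Psi_iter m (exp t)) = 2 * ln (sqrt (Psi_iter m (exp t))))
    by (rewrite <- hss at 1; rewrite ln_mult by lra; ring).
  rewrite H. field.
Qed.

Lemma eps_sq' m t : eps m t * eps m t = / Psi_iter m (exp t).
Proof. unfold eps. pose proof (Psi_iter_pos m _ (exp_pos t)) as HQ.
  pose proof (sqrt_lt_R0 _ HQ) as hs. pose proof (sqrt_sqrt _ (Rlt_le _ _ HQ)) as hss.
  rewrite <- Rinv_mult, hss. auto. Qed.

Lemma ln2_pos : 0 < ln 2.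
Proof. pose proof ln_lt_2. lra. Qed.

Lemma part2 r (hr : (1 <= r)%nat) :
  exists C delta : R, 0 < C /\ 0 < delta /\
     forall eta : R, 0 < eta < delta ->
       Rabs (xi_star r (/ 2 ^ r - eta)
             - (- 2 ^ r * ln (Rpower 2 (INR r - 1 + Rpower 2 (1 - INR r)) * eta)))
       <= C * eta.
Proof.
  destruct r as [|m]; [lia|].
  set (q := 2 ^ m). assert (hq : 1 <= q) by (unfold q; apply pow_R1_Rle; lra).
  assert (hp2 : 2 ^ S m = 2 * q) by (simpl; auto).
  assert (hp4 : 4 ^ S m = (2 * q) * (2 * q)) by (rewrite <- hp2, <- Rpow_mult_distr; f_equal; ring).
  rewrite hp2.
  pose proof (pos_INR m) as hm.
  exists (2 * q * (2 * q) * (2 * INR m + 4)), (/ (2 * q) - / ((2 * q) * (2 * q))).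
  split. nra.
  assert (hd : / (2 * q) - / (2 * q * (2 * q)) = (2 * q - 1) / (2 * q * (2 * q))) by (field; lra).
  split. rewrite hd. apply Rdiv_lt_0_compat; nra.
  intros eta [he1 he2].
  set (Sv := 2 * q * eta).
  assert (hS0 : 0 < Sv) by (unfold Sv; nra).
  assert (hS1 : Sv < 1).
  { unfold Sv. rewrite hd in he2. apply (Rmult_lt_compat_l (2*q)) in he2; [|lra].
    assert (2 * q * ((2 * q - 1) / (2 * q * (2 * q))) = 1 - / (2 * q)) by (field; lra).
    assert (0 < / (2*q)) by (apply Rinv_0_lt_compat; lra). lra. }
  set (y := / (2 * q) - eta).
  set (b := 2 * q * (ln (2 * INR (S m)) - ln Sv)).
  assert (hm1 : 1 <= INR (S m)) by (rewrite S_INR; lra).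
  assert (hb : 0 <= b).
  { unfold b. assert (ln Sv < 0) by (rewrite <- ln_1; apply ln_increasing; lra).
    assert (0 <= ln (2 * INR (S m))) by (rewrite <- ln_1; apply ln_le; lra). nra. }
  assert (hfb : y <= Dr (S m) b).
  { destruct (part2a m b hb) as [h1 _].
    pose proof (eps_range m b hb) as [he0 he1'].
    assert (eps m b ^ 2 <= eps m b) by nra.
    assert (INR m * eps m b ^ 2 <= INR m * eps m b) by (apply Rmult_le_compat_l; lra).
    assert (h3 : eps m b + INR m * eps m b ^ 2 <= INR (S m) * eps m b) by (rewrite S_INR; lra).
    assert (h4 : INR (S m) * eps m b <= Sv).
    { apply ln_le_inv. nra. auto.
      rewrite ln_mult by lra. rewrite ln_eps.
      assert (Hb1 : 1 <= exp b) by (rewrite <- exp_0; destruct hb as [hb'|hb']; [left; apply exp_increasing; exact hb'|rewrite <- hb'; lra]).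
      destruct (part2b m (exp b) Hb1) as [k1 k2]. rewrite ln_exp in k1. fold q in k1.
      assert (0 < / q <= 1) by (split; [apply Rinv_0_lt_compat; lra| rewrite <- Rinv_1; apply Rinv_le_contravar; lra]).
      pose proof ln2_pos.
      assert (Hbq : b / q = 2 * (ln (2 * INR (S m)) - ln Sv)) by (unfold b; field; lra).
      rewrite ln_mult in Hbq by lra.
      assert (2 * ln 2 * (1 - / q) <= 2 * ln 2) by nra.
      lra. }
    rewrite hp2 in h1. unfold y. apply (Rmult_le_reg_l (2 * q)). lra.
    unfold Sv in h4. assert (2 * q * (/ (2 * q) - eta) = 1 - 2 * q * eta) by (field; lra). lra. }
  destruct (IVT_cor (fun t => Dr (S m) t - y) 0 b) as (z & [hz1 hz2] & hz).
  { apply continuity_minus. apply Dr_cont. apply continuity_const; intros u v; auto. }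
  { auto. }
  { assert (Dr (S m) 0 <= y).
    { pose proof (Dr_at0 (S m)) as E. rewrite hp4 in E.
      assert (HD0 : Dr (S m) 0 = / (2*q*(2*q))) by (field_simplify_eq; lra).
      unfold y. rewrite hd in he2. rewrite HD0.
      assert (/ (2 * q) - (2 * q - 1) / (2 * q * (2 * q)) = / (2 * q * (2 * q))) by (field; lra). lra. }
    cbv beta. assert (0 <= Dr (S m) b - y) by lra. assert (Dr (S m) 0 - y <= 0) by lra. nra. }
  assert (hDz : Dr (S m) z = y) by lra.
  rewrite (xi_star_spec (S m) y z) by (auto; lia).
  destruct (part2a m z hz1) as [h1 h2]. rewrite hp2 in h1, h2.
  assert (hSz : 1 - 2 * q * Dr (S m) z = Sv) by (rewrite hDz; unfold y, Sv; field; lra).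
  rewrite hSz in h1, h2.
  pose proof (eps_range m z hz1) as [he0 he1'].
  set (e := eps m z) in *.
  assert (hx : 1 <= exp z) by (rewrite <- exp_0; destruct hz1; [left; apply exp_increasing|subst]; lra).
  destruct (part2b m (exp z) hx) as [k1 k2]. rewrite ln_exp in k1, k2. fold q in k1, k2.
  set (Q := Psi_iter m (exp z)) in *.
  assert (hQ : 0 < Q) by (unfold Q; apply Psi_iter_pos, exp_pos).
  assert (hee : e * e = / Q) by (unfold e, Q; apply eps_sq').
  assert (hle : ln e = - ln Q / 2) by (unfold e, Q; apply ln_eps).
  set (d := ln Q - z / q + 2 * ln 2 * (1 - / q)) in *.
  assert (hd2 : d <= 2 * e * e) by (rewrite Rmult_assoc, hee; unfold Rdiv in k2; lra).
  assert (hRp : Rpower 2 (1 - INR (S m)) = / q).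
  { rewrite S_INR. replace (1 - (INR m + 1)) with (- INR m) by ring.
    unfold Rpower. replace (- INR m * ln 2) with (- (INR m * ln 2)) by ring.
    rewrite exp_Ropp. fold (Rpower 2 (INR m)). rewrite Rpower_pow by lra. auto. }
  rewrite hRp.
  set (A := INR (S m) - 1 + / q).
  assert (hlA : ln (Rpower 2 A * eta) = A * ln 2 + ln eta).
  { rewrite ln_mult; [| unfold Rpower; apply exp_pos | lra]. unfold Rpower. rewrite ln_exp. auto. }
  rewrite hlA.
  assert (hlS : ln Sv = INR (S m) * ln 2 + ln eta).
  { unfold Sv. rewrite ln_mult by lra. rewrite <- hp2, ln_pow by lra. auto. }
  assert (Hid : z - - (2 * q) * (A * ln 2 + ln eta) = 2 * q * (ln Sv - ln e) - q * d).
  { rewrite hlS, hle. unfold d, A. rewrite S_INR. field. lra. }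
  rewrite Hid.
  assert (hes : e <= 2 * Sv).
  { assert (e <= Sv * (1 + e)).
    { apply (Rmult_le_reg_r (/ (1 + e))). apply Rinv_0_lt_compat; lra.
      rewrite Rmult_assoc, Rinv_r, Rmult_1_r by lra. auto. }
    nra. }
  assert (b1 : ln Sv - ln e <= INR m * e).
  { assert (Hl : ln (Sv / e) <= Sv / e - 1) by (apply ln_le_sub1; apply Rdiv_lt_0_compat; lra).
    unfold Rdiv in Hl. rewrite ln_mult, ln_Rinv in Hl; [| lra | lra | apply Rinv_0_lt_compat; lra].
    assert (Hl2 : Sv * / e - 1 <= INR m * e).
    { apply (Rmult_le_reg_r e). lra. replace ((Sv * /e - 1) * e) with (Sv - e) by (field; lra). nra. }
    lra. }
  assert (b2 : ln e - ln Sv <= e).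
  { assert (Hl : ln (e / Sv) <= e / Sv - 1) by (apply ln_le_sub1; apply Rdiv_lt_0_compat; lra).
    unfold Rdiv in Hl. rewrite ln_mult, ln_Rinv in Hl by (try lra; apply Rinv_0_lt_compat; lra).
    assert (Hl2 : e / Sv <= 1 + e).
    { apply (Rmult_le_reg_r Sv). lra. unfold Rdiv. rewrite Rmult_assoc, Rinv_l, Rmult_1_r by lra.
      apply (Rmult_le_reg_r (/ (1 + e))). apply Rinv_0_lt_compat; lra.
      replace ((1 + e) * Sv * / (1 + e)) with Sv by (field; lra). auto. }
    unfold Rdiv in Hl2. lra. }
  assert (hd0 : 0 <= d) by lra.
  assert (hd1 : d <= 2 * e) by nra.
  assert (b3 : q * d <= q * (2 * e)) by (apply Rmult_le_compat_l; lra).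
  assert (b4 : 0 <= q * d) by (apply Rmult_le_pos; lra).
  assert (b5 : 2 * q * (ln Sv - ln e) >= - (2 * q * e)) by nra.
  assert (b6 : 2 * q * (ln Sv - ln e) <= 2 * q * (INR m * e)) by (apply Rmult_le_compat_l; lra).
  assert (b7 : INR m * e <= INR m * (2 * Sv)) by (apply Rmult_le_compat_l; lra).
  assert (b8 : 2 * q * (INR m * e) <= 2 * q * (INR m * (2 * Sv))) by (apply Rmult_le_compat_l; lra).
  assert (b9 : 2 * q * e <= 2 * q * (2 * Sv)) by (apply Rmult_le_compat_l; lra).
  assert (Ce : 2 * q * (2 * q) * (2 * INR m + 4) * eta = 2 * q * (INR m * (2 * Sv)) + 2 * q * (2 * Sv) + 2 * q * (2*Sv)) by (unfold Sv; ring).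
  rewrite Ce.
  assert (0 <= 2 * q * (INR m * (2 * Sv))) by (apply Rmult_le_pos; [lra| apply Rmult_le_pos; lra]).
  apply Rabs_le. split.
  - lra.
  - assert (0 <= 2 * q * (2 * Sv)) by nra. lra.
Qed.

Theorem theorem4p4 (r : nat) (hr : (1 <= r)%nat) :
  (exists C delta : R, 0 < C /\ 0 < delta /\
     forall eta : R, 0 < eta < delta ->
       Rabs (xi_star r eta
             - 2 * ln (4 ^ r * eta * sqrt (Psi_iter r 0 * prod_Psi r)))
       <= C * eta)
  /\
  (exists C delta : R, 0 < C /\ 0 < delta /\
     forall eta : R, 0 < eta < delta ->
       Rabs (xi_star r (/ 2 ^ r - eta)
             - (- 2 ^ r * ln (Rpower 2 (INR r - 1 + Rpower 2 (1 - INR r)) * eta)))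
       <= C * eta).
Proof. split; [apply part1 | apply part2]; auto. Qed.
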